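(* Let $X \in \mathbb{R}^{n\times p}$, let $I \subset \{1,\ldots,p\}$ be an index set with complement $I^c = \{1,\ldots,p\}\setminus I$, and suppose $W \in \mathbb{R}^{p\times p}$ satisfies $W_{I^c} = 0$ (i.e., every row of $W$ with index in $I^c$ is zero). Then $$\|X - X W W^{+}\|_F > \|X - X^{I} (X^{I})^{+} X\|_F,$$ unless $\mathcal{L}_{\mathrm{col}}(X^{I}) \perp \mathcal{L}_{\mathrm{col}}(X^{I^c})$, in which case $\|X - X W W^{+}\|_F \ge \|X - X^{I} (X^{I})^{+} X\|_F$ holds.
   Context: For a matrix $A$ and an index set $J$, $A_{J}$ denotes the submatrix of $A$ consisting of the rows indexed by $J$, and $A^{J}$ denotes the submatrix consisting of the columns indexed by $J$. $A^{+}$ denotes the Moore–Penrose pseudoinverse of $A$, $\|\cdot\|_F$ the Frobenius norm, and $\mathcal{L}_{\mathrm{col}}(A)$ the column space of $A$. Two subspaces are written $\perp$ when they are orthogonal. *)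

(* Defs.v *)
From HB Require Import structures.
From mathcomp Require Import all_boot all_order all_algebra.
Set Implicit Arguments. Unset Strict Implicit. Unset Printing Implicit Defensive.
Import Order.TTheory GRing.Theory Num.Theory.
Local Open Scope ring_scope.

Definition frob (R : rcfType) (m n : nat) (A : 'M[R]_(m, n)) : R :=
  Num.sqrt (\sum_(i < m) \sum_(j < n) A i j ^+ 2).

(* B is the Moore-Penrose pseudoinverse of A (the four Penrose conditions;
   it exists and is unique). *)
Definition is_pinv (R : rcfType) (m n : nat) (A : 'M[R]_(m, n)) (B : 'M[R]_(n, m))
  : Prop :=
  [/\ A *m B *m A = A, B *m A *m B = B,
      (A *m B)^T = A *m B & (B *m A)^T = B *m A].

(* A^J : the submatrix of the columns of A indexed by J (in increasing order). *)
Definition colsJ (R : Type) (m n : nat) (A : 'M[R]_(m, n)) (J : {set 'I_n})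
  : 'M[R]_(m, #|J|) :=
  colsub (fun k : 'I_#|J| => enum_val k) A.

Definition in_colspace (R : rcfType) (m n : nat) (A : 'M[R]_(m, n)) (x : 'cV[R]_m)
  : Prop := exists u : 'cV[R]_n, x = A *m u.

Definition colspace_orth (R : rcfType) (m n1 n2 : nat)
  (A : 'M[R]_(m, n1)) (B : 'M[R]_(m, n2)) : Prop :=
  forall x y : 'cV[R]_m, in_colspace A x -> in_colspace B y -> x^T *m y = 0.

(* Main.v *)
Require Import Defs.
From mathcomp Require Import all_boot all_order all_algebra.
Import Order.TTheory GRing.Theory Num.Theory.
Local Open Scope ring_scope.

Section Aux.
Variable R : rcfType.

Definition ssq (m n : nat) (A : 'M[R]_(m, n)) : R :=
  \sum_(i < m) \sum_(j < n) A i j ^+ 2.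
Arguments ssq {m n}.

Lemma ssq_tr m n (A : 'M[R]_(m, n)) : ssq A = \tr (A^T *m A).
Proof.
rewrite /ssq /mxtrace exchange_big; apply: eq_bigr => j _.
rewrite mxE; apply: eq_bigr => i _; by rewrite !mxE expr2.
Qed.

Lemma ssq_ge0 m n (A : 'M[R]_(m, n)) : 0 <= ssq A.
Proof. by apply: sumr_ge0 => i _; apply: sumr_ge0 => j _; apply: sqr_ge0. Qed.

Lemma ssq_gt0 m n (A : 'M[R]_(m, n)) : A != 0 -> 0 < ssq A.
Proof.
move=> nz; rewrite lt_def ssq_ge0 andbT; apply/eqP => H; move/eqP: nz; apply.
apply/matrixP => i j; rewrite mxE.
have H1 := psumr_eq0P (fun i _ => sumr_ge0 _ (fun j _ => sqr_ge0 (A i j))) H.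
have H2 := psumr_eq0P (fun j _ => sqr_ge0 (A i j)) (H1 i isT).
by apply/eqP; rewrite -sqrf_eq0 (H2 j isT).
Qed.

Lemma ssq_pyth m n (A B : 'M[R]_(m, n)) : A^T *m B = 0 ->
  ssq (A + B) = ssq A + ssq B.
Proof.
move=> H; have H' : B^T *m A = 0 by rewrite -[A]trmxK -trmx_mul H trmx0.
rewrite !ssq_tr.
have -> : (A + B)^T = A^T + B^T by apply/matrixP=> i j; rewrite !mxE.
rewrite mulmxDl !mulmxDr H H' addr0 add0r.
by rewrite mxtraceD.
Qed.
End Aux.
Arguments ssq {R m n}.

Theorem theorem3 (R : rcfType) (n p : nat) (X : 'M[R]_(n, p)) (I : {set 'I_p})
  (W : 'M[R]_p) (Wp : 'M[R]_p) (XIp : 'M[R]_(#|I|, n)) :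
  (forall (i : 'I_p) (j : 'I_p), i \notin I -> W i j = 0) ->
  is_pinv W Wp ->
  is_pinv (colsJ X I) XIp ->
  (~ colspace_orth (colsJ X I) (colsJ X (~: I)) ->
     frob (X - X *m W *m Wp) > frob (X - colsJ X I *m XIp *m X)) /\
  (colspace_orth (colsJ X I) (colsJ X (~: I)) ->
     frob (X - X *m W *m Wp) >= frob (X - colsJ X I *m XIp *m X)).
Proof.
move=> HW [W1 W2 W3 W4] [A1 A2 A3 A4].
set A := colsJ X I in A1 A2 A3 A4 *.
set P := A *m XIp in A1 A3 *.
set Q := W *m Wp in W1 W3 *.
rewrite -mulmxA -/Q.
have QI : forall i j, i \notin I -> Q i j = 0.
  move=> i j Hi; rewrite mxE big1 // => k _; by rewrite HW // mul0r.
have QIc : forall i j, j \notin I -> Q i j = 0.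
  move=> i j Hj; by rewrite -W3 mxE QI.
have PP : P *m P = P by rewrite /P mulmxA A1.
have PXI : forall r j, j \in I -> (P *m X) r j = X r j.
  move=> r j Hj; have := congr1 (fun M : 'M[R]_(n, #|I|) => M r (enum_rank_in Hj j)) A1.
  rewrite -/P !mxE (enum_rankK_in Hj Hj) => <-.
  apply: eq_bigr => s _; by rewrite !mxE (enum_rankK_in Hj Hj).
have PXQ : P *m (X *m Q) = X *m Q.
  rewrite mulmxA; apply/matrixP => r c; rewrite !mxE; apply: eq_bigr => j _.
  case: (boolP (j \in I)) => Hj; first by rewrite PXI.
  by rewrite QI // !mulr0.
have Pt : P^T = P by [].
set B := X - P *m X.
set C := P *m X - X *m Q.
have BC : B^T *m C = 0.
  have -> : B^T = X^T - X^T *m P by rewrite /B linearB /= trmx_mul A3.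
  rewrite /C -PXQ -mulmxBr mulmxA mulmxBl.
  by rewrite -(mulmxA _ P P) PP subrr mul0mx.
have decomp : X - X *m Q = B + C by rewrite /B /C addrA subrK.
have key : ssq (X - X *m Q) = ssq B + ssq C by rewrite decomp ssq_pyth.
have weak : frob (X - P *m X) <= frob (X - X *m Q).
  rewrite /frob -!/(ssq _) ler_sqrt ?ssq_ge0 // key lerDl ssq_ge0 //.
split=> // Horth.
have [CE|CN] := eqVneq C 0.
  exfalso; apply: Horth => x y [u ->] [v ->].
  have PXc : forall r j, j \notin I -> (P *m X) r j = 0.
    move=> r j Hj; move/eqP: CE; rewrite subr_eq0 => /eqP ->.
    rewrite mxE big1 // => k _; by rewrite QIc // mulr0.
  have PB : P *m colsJ X (~: I) = 0.
    apply/matrixP => r k; rewrite !mxE.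
    have Hk := enum_valP k; rewrite in_setC in Hk.
    rewrite -[RHS](PXc r _ Hk) mxE; apply: eq_bigr => s _; by rewrite /colsJ !mxE.
  have AP : A^T = A^T *m P by rewrite -{1}A1 -/P trmx_mul Pt.
  clearbody P.
  by rewrite trmx_mul AP -!mulmxA (mulmxA P) PB mul0mx !mulmx0.
rewrite /frob -!/(ssq _) ltr_sqrt; last first.
  rewrite key; apply: ltr_wpDl; [exact: ssq_ge0 | exact: ssq_gt0].
by rewrite key ltrDl ssq_gt0.
Qed.
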